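(* Let $G=(V,E,w)$ be a weighted graph with matrix $W$, and let $\theta\in[0,1]^V$ satisfy $W\theta\ge\mathbf 1$ coordinatewise. Let $\mathcal{D}$ be the distribution of a random subset $S\subseteq V$ that includes each $v\in V$ independently with probability $\theta_v$. Then (i) $\mathbb{E}_{S\sim\mathcal{D}}[|S|]=\|\theta\|_1$; (ii) $\mathbb{E}_{S\sim\mathcal{D}}[\mathrm{Induced}(S)]\le\|\theta\|_1^2+\|\theta\|_1$; (iii) $\mathbb{E}_{S\sim\mathcal{D}}[\mathrm{Cut}(S,V\setminus S)]\ge|V|-2\|\theta\|_1$.
   Context: $W=(W_{u,v})_{u,v\in V}$ is a symmetric matrix with entries in $[0,1]$ and $W_{v,v}=1$; the weighted graph has edges $\{u,v\}$, $u\neq v$, with $W_{u,v}>0$ and weight $W_{u,v}$. For $S\subseteq V$: $\mathrm{Cut}(S,V\setminus S)=\sum_{u\in S}\sum_{v\in V\setminus S}W_{u,v}$ and $\mathrm{Induced}(S)=\sum_{u\in S}\sum_{v\in S}W_{u,v}$. *)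

(* Defs.v *)
From mathcomp Require Import all_boot all_order all_algebra.
Set Implicit Arguments. Unset Strict Implicit. Unset Printing Implicit Defensive.
Import Order.TTheory GRing.Theory Num.Theory.
Local Open Scope ring_scope.

Section Defs.
Variables (R : realFieldType) (V : finType).

Definition Cut (W : V -> V -> R) (S : {set V}) : R :=
  \sum_(u in S) \sum_(v in ~: S) W u v.

Definition Induced (W : V -> V -> R) (S : {set V}) : R :=
  \sum_(u in S) \sum_(v in S) W u v.

(* probability of S under independent inclusion of each v with prob theta v *)
Definition prodProb (theta : V -> R) (S : {set V}) : R :=
  \prod_(v in S) theta v * \prod_(v in ~: S) (1 - theta v).

Definition Expect (theta : V -> R) (f : {set V} -> R) : R :=
  \sum_(S : {set V}) prodProb theta S * f S.

Definition norm1 (theta : V -> R) : R := \sum_v `|theta v|.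

End Defs.

(* Main.v *)
Require Import Defs.
From mathcomp Require Import all_boot all_order all_algebra.
From mathcomp Require Import lra.
Import Order.TTheory GRing.Theory Num.Theory.
Local Open Scope ring_scope.

Section H.
Variables (R : realFieldType) (V : finType) (theta : V -> R).

Lemma sum_set_prod (c : V -> bool -> R) :
  \sum_(S : {set V}) \prod_v c v (v \in S) = \prod_v (c v true + c v false).
Proof.
have -> : \prod_v (c v true + c v false) = \prod_v \sum_(b : bool) c v b.
  by apply: eq_bigr => v _; rewrite big_bool.
rewrite bigA_distr_bigA /=.
rewrite (reindex (fun f : {ffun V -> bool} => [set x | f x])) /=.
  by apply: eq_bigr => f _; apply: eq_bigr => v _; rewrite inE.
exists (fun S : {set V} => [ffun x => x \in S]) => [f _|S _].
  by apply/ffunP => x; rewrite ffunE inE.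
by apply/setP => x; rewrite inE ffunE.
Qed.

Lemma prodProbE S : prodProb theta S = \prod_v (if v \in S then theta v else 1 - theta v).
Proof.
rewrite /prodProb [RHS](bigID (mem S)) /=; congr (_ * _).
  by apply: eq_bigr => v ->.
by apply: eq_big => [v|v]; rewrite ?inE // => /negbTE ->.
Qed.

Lemma E_prod (c : V -> bool -> R) :
  Expect theta (fun S => \prod_v c v (v \in S)) =
  \prod_v (theta v * c v true + (1 - theta v) * c v false).
Proof.
rewrite /Expect.
apply: etrans (_ : \sum_(S : {set V}) \prod_v ((if v \in S then theta v else 1 - theta v) * c v (v \in S)) = _).
  by apply: eq_bigr => S _; rewrite prodProbE -big_split.
rewrite (sum_set_prod (fun v b => (if b then theta v else 1 - theta v) * c v b)).
by [].
Qed.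

Lemma E_ext f g : (forall S, f S = g S) -> Expect theta f = Expect theta g.
Proof. by move=> e; apply: eq_bigr => S _; rewrite e. Qed.

Lemma E_sum (I : Type) (r : seq I) (P : pred I) (F : I -> {set V} -> R) :
  Expect theta (fun S => \sum_(i <- r | P i) F i S) = \sum_(i <- r | P i) Expect theta (F i).
Proof.
rewrite /Expect; under eq_bigr do rewrite mulr_sumr.
by rewrite exchange_big.
Qed.

Lemma E_scale a f : Expect theta (fun S => a * f S) = a * Expect theta f.
Proof. by rewrite /Expect mulr_sumr; apply: eq_bigr => S _; rewrite mulrCA. Qed.

Lemma E_single u (a : bool -> R) :
  Expect theta (fun S => a (u \in S)) = theta u * a true + (1 - theta u) * a false.
Proof.
rewrite (E_ext _ (fun S => \prod_v (if v == u then a (v \in S) else 1))).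
  rewrite (E_prod (fun v b => if v == u then a b else 1)) (bigD1 u) //= eqxx.
  rewrite big1 ?mulr1 // => v /negbTE ->; rewrite !mulr1; lra.
move=> S; rewrite (bigD1 u) //= eqxx big1 ?mulr1 // => v /negbTE -> //.
Qed.

Lemma E_pair u w (a1 a2 : bool -> R) : u != w ->
  Expect theta (fun S => a1 (u \in S) * a2 (w \in S)) =
  (theta u * a1 true + (1 - theta u) * a1 false) *
  (theta w * a2 true + (1 - theta w) * a2 false).
Proof.
move=> uw.
have wu : w != u by rewrite eq_sym.
rewrite (E_ext _ (fun S => \prod_v (if v == u then a1 (v \in S) else
                                       if v == w then a2 (v \in S) else 1))).
  rewrite (E_prod (fun v b => if v == u then a1 b else if v == w then a2 b else 1)).
  rewrite (bigD1 u) //= eqxx (bigD1 w) //= (negbTE wu) eqxx.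
  rewrite big1 ?mulr1 // => v /andP [/negbTE -> /negbTE ->]; lra.
move=> S; rewrite (bigD1 u) //= eqxx (bigD1 w) //= (negbTE wu) eqxx.
by rewrite big1 ?mulr1 // => v /andP [/negbTE -> /negbTE ->].
Qed.
End H.

Theorem lemma5p2 (R : realFieldType) (V : finType)
  (W : V -> V -> R) (theta : V -> R)
  (Wsym : forall u v, W u v = W v u)
  (W01 : forall u v, 0 <= W u v <= 1)
  (Wdiag : forall v, W v v = 1)
  (theta01 : forall v, 0 <= theta v <= 1)
  (Wtheta : forall u, 1 <= \sum_v W u v * theta v) :
  [/\ Expect theta (fun S => (#|S|%:R : R)) = norm1 theta,
      Expect theta (Induced W) <= norm1 theta ^+ 2 + norm1 theta &
      Expect theta (Cut W) >= #|V|%:R - 2 * norm1 theta].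
Proof.
pose ind (b : bool) : R := if b then 1 else 0.
have n1E : norm1 theta = \sum_v theta v.
  by apply: eq_bigr => v _; rewrite ger0_norm //; case/andP: (theta01 v).
have diagsum : forall F : V -> R, \sum_u \sum_v (if u == v then F u else 0) = \sum_u F u.
  move=> F; apply: eq_bigr => u _; rewrite (bigD1 u) //= eqxx big1 ?addr0 //.
  by move=> v; rewrite eq_sym => /negbTE ->.
split.
- rewrite (@E_ext _ _ theta _ (fun S => \sum_u ind (u \in S))); last first.
    move=> S; rewrite -sum1_card natr_sum big_mkcond /=.
    by apply: eq_bigr => u _; rewrite /ind; case: (u \in S).
  rewrite E_sum n1E; apply: eq_bigr => u _.
  rewrite (@E_single _ _ theta _ ind) /ind; lra.
- rewrite (@E_ext _ _ theta _ (fun S => \sum_u \sum_v W u v * (ind (u \in S) * ind (v \in S)))); last first.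
    move=> S; rewrite /Induced big_mkcond /=; apply: eq_bigr => u _.
    rewrite /ind; case: (u \in S).
      rewrite big_mkcond /=; apply: eq_bigr => v _; case: (v \in S) => /=; lra.
    by rewrite big1 // => v _; rewrite !mul0r mulr0.
  rewrite E_sum.
  apply: (@le_trans _ _ (\sum_u \sum_v (theta u * theta v + if u == v then theta u else 0))).
    apply: ler_sum => u _; rewrite E_sum; apply: ler_sum => v _; rewrite E_scale.
    have [t1 t2] := andP (theta01 u); have [t3 t4] := andP (theta01 v).
    have [w1 w2] := andP (W01 u v).
    case: (eqVneq u v) => [<-|uv].
      rewrite (@E_single _ _ theta _ (fun b => ind b * ind b)) /ind Wdiag; nra.
    rewrite (@E_pair _ _ theta _ _ ind ind uv) /ind !mulr1 !mulr0 !addr0; apply: ler_piMl => //; exact: mulr_ge0.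
  rewrite n1E expr2 mulr_suml.
  under eq_bigr do rewrite big_split /=.
  rewrite big_split /= diagsum lerD2r le_eqVlt; apply/orP; left; apply/eqP.
  apply: eq_bigr => u _; rewrite mulr_sumr //.
- rewrite (@E_ext _ _ theta _ (fun S => \sum_u \sum_v W u v * (ind (u \in S) * ind (~~ (v \in S))))); last first.
    move=> S; rewrite /Cut big_mkcond /=; apply: eq_bigr => u _.
    rewrite /ind; case: (u \in S).
      rewrite big_mkcond /=; apply: eq_bigr => v _; rewrite inE; case: (v \in S) => /=; lra.
    by rewrite big1 // => v _; rewrite !mul0r mulr0.
  rewrite E_sum.
  apply: (@le_trans _ _ (\sum_u \sum_v (W u v * theta u * (1 - theta v) - if u == v then theta u else 0))); last first.
    apply: ler_sum => u _; rewrite E_sum; apply: ler_sum => v _; rewrite E_scale.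
    have [t1 t2] := andP (theta01 u); have [t3 t4] := andP (theta01 v).
    have [w1 w2] := andP (W01 u v).
    case: (eqVneq u v) => [<-|uv].
      rewrite (@E_single _ _ theta _ (fun b => ind b * ind (~~ b))) /ind Wdiag /=; nra.
    rewrite (@E_pair _ _ theta _ _ ind (fun b => ind (~~ b)) uv) /ind /=; lra.
  under eq_bigr do rewrite sumrB.
  rewrite sumrB diagsum -n1E.
  have : #|V|%:R - norm1 theta <= \sum_u \sum_v W u v * theta u * (1 - theta v).
    rewrite exchange_big /=.
    apply: (@le_trans _ _ (\sum_v (1 - theta v) * 1)).
      rewrite le_eqVlt; apply/orP; left; apply/eqP; under [RHS]eq_bigr do rewrite mulr1; rewrite sumrB sumr_const n1E. by [].
    apply: ler_sum => v _.
    have [t3 t4] := andP (theta01 v).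
    have -> : \sum_u W u v * theta u * (1 - theta v) = (1 - theta v) * \sum_u W v u * theta u.
      by rewrite mulr_sumr; apply: eq_bigr => u _; rewrite Wsym; lra.
    by apply: ler_wpM2l; [lra | exact: Wtheta].
  lra.
Qed.
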